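(* Consider the optimal clique cover delivery problem for a system with $K$ users and a given set $\mathcal{W}$ of subfiles to be delivered, and let $\mathscr{P}$ be the set of all cliques (feasible packets) that can be formed from $\mathcal{W}$. Run the following greedy algorithm with input $\mathcal{W}$ and $\mathscr{P}$: set $\mathscr{C}=\emptyset$, $\mathcal{E}=\mathcal{W}$, $\mathscr{S}=\mathscr{P}$; while $\mathcal{E}\neq\emptyset$: choose $\mathcal{P}^*\in\arg\max_{\mathcal{P}\in\mathscr{S}} |\mathcal{P}|/\|\mathcal{P}\|$ (ties broken arbitrarily), set $\mathscr{C}=\mathscr{C}\cup\{\mathcal{P}^*\}$, set $\mathcal{E}=\mathcal{E}\setminus\mathcal{P}^*$, and remove from $\mathscr{S}$ every $\mathcal{S}\in\mathscr{S}$ with $\mathcal{S}\cap\mathcal{P}^*\neq\emptyset$; output $\mathscr{C}$. Then this algorithm achieves a $(1+\log K)$-approximation to the optimal clique cover delivery problem, i.e., $\mathscr{C}$ is a set of cliques covering $\mathcal{W}$ and $\sum_{\mathcal{P}\in\mathscr{C}}\|\mathcal{P}\|\le(1+\log K)\cdot\mathrm{OPT}$, where $\mathrm{OPT}$ is the optimal value of the problem.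
   Context: Setting: a server and $K$ users, $[K]=\{1,\dots,K\}$; user $k$ requests file $W_k$. For $k\in[K]$ and $\mathcal{A}\subseteq[K]\setminus\{k\}$, $W_{k,\mathcal{A}}$ denotes the subfile of $W_k$ consisting of the bits cached exactly by the users in $\mathcal{A}$, and $\|W_{k,\mathcal{A}}\|$ is its size in bits (a nonnegative integer). The set of subfiles to be delivered is $\mathcal{W}=\{W_{k,\mathcal{A}}: k\in[K],\ \mathcal{A}\subseteq[K]\setminus\{k\},\ \|W_{k,\mathcal{A}}\|\neq 0\}$ (the sizes may be arbitrary). A clique (feasible packet) is a nonempty set $\mathcal{P}\subseteq\mathcal{W}$ of the form $\{W_{k,\mathcal{A}_k}: k\in\mathcal{M}\}$ for some $\mathcal{M}\subseteq[K]$ (at most one subfile per user) such that $k\in\mathcal{A}_{k'}$ for all distinct $k,k'\in\mathcal{M}$; equivalently, a clique of the side-information graph on vertex set $\mathcal{W}$ in which $W_{k,\mathcal{A}}$ and $W_{l,\mathcal{B}}$ ($k\neq l$) are adjacent iff $l\in\mathcal{A}$ and $k\in\mathcal{B}$. The size of a clique is $\|\mathcal{P}\|=\max_{W\in\mathcal{P}}\|W\|$, and $|\mathcal{P}|$ is its number of subfiles. The optimal clique cover delivery problem: choose a set of cliques whose union is $\mathcal{W}$ minimizing the sum of their sizes. *)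

(* Defs.v *)
From Stdlib Require Export Reals.
From mathcomp Require Export all_boot.
Set Implicit Arguments. Unset Strict Implicit. Unset Printing Implicit Defensive.

Section CliqueCover.
Variable K : nat.
(* size k A = ||W_{k,A}|| in bits *)
Variable size : 'I_K -> {set 'I_K} -> nat.

(* A (potential) subfile W_{k,A} is represented by the pair (k, A). *)
Definition subfile := ('I_K * {set 'I_K})%type.

Definition Wset : {set subfile} :=
  [set x : subfile | (x.1 \notin x.2) && (size x.1 x.2 != 0)].

Definition clique (P : {set subfile}) : bool :=
  [&& P != set0, P \subset Wset &
   [forall x in P, forall y in P,
      (x != y) ==> [&& x.1 != y.1, x.1 \in y.2 & y.1 \in x.2]]].

Definition csize (P : {set subfile}) : nat := \max_(x in P) size x.1 x.2.

Definition ratio (P : {set subfile}) : R := Rdiv (INR #|P|) (INR (csize P)).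

Definition cost (C : {set {set subfile}}) : nat := \sum_(P in C) csize P.

Definition clique_cover (C : {set {set subfile}}) : Prop :=
  (forall P, P \in C -> clique P) /\ \bigcup_(P in C) P = Wset.

(* Algorithm state after having chosen the cliques in [prev]:
   E = W minus everything covered so far,
   S = all cliques that intersect none of the chosen cliques. *)
Definition remaining (prev : seq {set subfile}) : {set subfile} :=
  Wset :\: \bigcup_(P <- prev) P.

Definition avail (prev : seq {set subfile}) : {set {set subfile}} :=
  [set Q | clique Q & all (fun P : {set subfile} => [disjoint Q & P]) prev].

(* [greedy_from prev s]: starting from the state reached after choosing
   [prev], the greedy algorithm (with some tie-breaking) chooses exactly
   the cliques of [s], in this order, and then stops. *)
Fixpoint greedy_from (prev : seq {set subfile}) (s : seq {set subfile}) : Prop :=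
  match s with
  | [::] => remaining prev = set0
  | P :: s' =>
      remaining prev != set0 /\
      P \in avail prev /\
      (forall Q, Q \in avail prev -> Rle (ratio Q) (ratio P)) /\
      greedy_from (rcons prev P) s'
  end.

Definition greedy_run (s : seq {set subfile}) : Prop := greedy_from [::] s.

Definition greedy_output (s : seq {set subfile}) : {set {set subfile}} :=
  [set P in s].

End CliqueCover.

(* Main.v *)
Require Import Defs.
From Stdlib Require Import Reals Lra.

Local Open Scope R_scope.

Lemma ln_le_R (x y : R) : (0 < x) -> (x <= y) -> (ln x <= ln y).
Proof.
move=> x0 [xy|->]; last by apply: Rle_refl.
by apply: Rlt_le; apply: ln_increasing.
Qed.

Lemma inv_le_ln_diff (a : R) : (1 < a) -> (/ a <= ln a - ln (a - 1)).
Proof.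
move=> a1.
have a0 : (0 < a) by lra.
have ia : (0 < / a < 1).
  split; first by apply: Rinv_0_lt_compat.
  rewrite -Rinv_1; apply: Rinv_lt_contravar; lra.
have e : (a - 1 = a * (1 - / a)) by field; lra.
rewrite e ln_mult //; last lra.
have : (ln (1 - / a) <= - / a).
  rewrite -[X in (_ <= X)]ln_exp; apply: ln_le_R; first lra.
  have := exp_ineq1_le (- / a); lra.
lra.
Qed.

Lemma ln0 : ln 0 = 0.
Proof. by rewrite /ln; case: Rlt_dec => // h; exfalso; lra. Qed.


Lemma ln_step n : / INR n.+2 <= ln (INR n.+2) - ln (INR n.+1).
Proof.
have h1 : 1 < INR n.+2 by rewrite S_INR S_INR; have := pos_INR n; lra.
have := inv_le_ln_diff _ h1.
by have -> : INR n.+2 - 1 = INR n.+1 by rewrite (S_INR n.+1); lra.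
Qed.

Local Close Scope R_scope.

From mathcomp Require Import all_boot order ssralg ssrnum Rstruct.
Import Order.TTheory GRing.Theory Num.Theory.


Lemma clique_sub K (size : 'I_K -> {set 'I_K} -> nat) (P Q : {set subfile K}) :
  clique size Q -> P \subset Q -> P != set0 -> clique size P.
Proof.
move=> /and3P[_ QW /forall_inP HQ] PQ P0; apply/and3P; split=> //.
  exact: subset_trans QW.
apply/forall_inP=> x xP; apply/forall_inP=> y yP.
by have /forall_inP := HQ x (subsetP PQ x xP); apply; apply: (subsetP PQ).
Qed.

Lemma clique_csize_pos K (size : 'I_K -> {set 'I_K} -> nat) (P : {set subfile K}) :
  clique size P -> 0 < csize size P.
Proof.
move=> /and3P[/set0Pn[x xP] PW _].
have := subsetP PW x xP; rewrite inE => /andP[_ s0].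
rewrite /csize (bigD1 x) //= lt0n; apply: contra s0.
by rewrite -leqn0 => /(leq_trans (leq_maxl _ _)); rewrite leqn0.
Qed.

Lemma clique_card K (size : 'I_K -> {set 'I_K} -> nat) (P : {set subfile K}) :
  clique size P -> #|P| <= K.
Proof.
move=> /and3P[_ _ /forall_inP H].
have inj : {in P &, injective (fun x : subfile K => x.1)}.
  move=> x y xP yP /= e; apply/eqP; apply/negPn/negP=> nxy.
  have /forall_inP := H x xP => /(_ y yP); rewrite nxy /= => /and3P[].
  by rewrite e eqxx.
rewrite -(card_in_imset inj).
by apply: leq_trans (max_card _) _; rewrite card_ord.
Qed.

Lemma csize_sub K (size : 'I_K -> {set 'I_K} -> nat) (A B : {set subfile K}) :
  A \subset B -> csize size A <= csize size B.
Proof.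
move=> AB; apply/bigmax_leqP=> x xA.
by rewrite /csize (bigD1 x) ?(subsetP AB x xA) //= leq_maxl.
Qed.

Lemma remaining_rcons K (size : 'I_K -> {set 'I_K} -> nat) prev P :
  remaining size (rcons prev P) = remaining size prev :\: P.
Proof.
by rewrite /remaining -cats1 big_cat /= big_seq1 setDDl.
Qed.

Lemma mem_bigcup_seq (T : finType) (s : seq {set T}) x :
  (x \in \bigcup_(P <- s) P) = has (fun P : {set T} => x \in P) s.
Proof. by elim: s => [|P s IH]; rewrite ?big_nil ?big_cons ?inE // IH. Qed.

Lemma avail_sub K (size : 'I_K -> {set 'I_K} -> nat) prev P :
  P \in avail size prev -> P \subset remaining size prev.
Proof.
rewrite inE => /andP[/and3P[_ PW _] /allP H].
apply/subsetP=> x xP; rewrite inE (subsetP PW x xP) andbT.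
rewrite mem_bigcup_seq; apply/hasP=> -[Q Qin xQ].
by have := disjointFr (H Q Qin) xP; rewrite xQ.
Qed.

Lemma avail_inter K (size : 'I_K -> {set 'I_K} -> nat) prev Q :
  clique size Q -> Q :&: remaining size prev != set0 ->
  Q :&: remaining size prev \in avail size prev.
Proof.
move=> cQ n0; rewrite inE; apply/andP; split.
  by apply: clique_sub cQ _ n0; apply: subsetIl.
apply/allP=> P Pin; rewrite -setI_eq0 /remaining.
apply/eqP/setP=> x; rewrite !inE.
apply/negP=> /andP[/and4P[_ + _ _] xP]; rewrite mem_bigcup_seq => /hasP; apply.
by exists P.

Qed.


Lemma argmaxR (T : eqType) (f : T -> R) (s : seq T) : s != [::] ->
  exists2 P, P \in s & forall Q, Q \in s -> Rle (f Q) (f P).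
Proof.
elim: s => [//|a s IH] _.
case: s IH => [|b s] IH.
  by exists a => [|Q]; rewrite ?inE // => /eqP->; apply: Rle_refl.
have [//|P Ps HP] := IH.
case: (Rle_dec (f a) (f P)) => H.
  exists P; first by rewrite inE Ps orbT.
  by move=> Q; rewrite inE => /orP[/eqP->//|]; apply: HP.
exists a; first by rewrite inE eqxx.
move=> Q; rewrite inE => /orP[/eqP->|/HP QP]; first by apply: Rle_refl.
apply: Rle_trans QP _; apply: Rlt_le; apply: Rnot_le_lt H.
Qed.

Lemma clique1 K (size : 'I_K -> {set 'I_K} -> nat) x :
  x \in Wset size -> clique size [set x].
Proof.
move=> xW; apply/and3P; split.
- by apply/set0Pn; exists x; rewrite inE.
- by apply/subsetP=> y; rewrite inE => /eqP->.
- apply/forall_inP=> y; rewrite inE => /eqP->; apply/forall_inP=> z.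
  by rewrite inE => /eqP->; rewrite eqxx.
Qed.

Lemma greedy_exists_from K (size : 'I_K -> {set 'I_K} -> nat) n prev :
  #|remaining size prev| <= n -> exists s, greedy_from size prev s.
Proof.
elim: n prev => [|n IH] prev Hn.
  by exists [::]; apply/eqP; rewrite -cards_eq0 -leqn0.
have [E0|/set0Pn[x xE]] := eqVneq (remaining size prev) set0.
  by exists [::].
have xW : x \in Wset size by move: xE; rewrite inE => /andP[].
have Hx : [set x] \in avail size prev.
  have := @avail_inter K size prev [set x] (@clique1 K size x xW).
  have -> : [set x] :&: remaining size prev = [set x].
    by apply/setIidPl; rewrite sub1set.
  by apply; apply/set0Pn; exists x; rewrite inE.
have ne : enum (avail size prev) != [::].
  by apply/eqP=> e; have := mem_enum (mem (avail size prev)) [set x]; rewrite e Hx.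
have [P Pin HP] := @argmaxR _ (@ratio K size) _ ne.
rewrite mem_enum in Pin.
have PE := @avail_sub K size prev P Pin.
have P0 : P != set0 by move: Pin; rewrite inE => /andP[/and3P[]].
have Hlt : #|remaining size (rcons prev P)| <= n.
  rewrite remaining_rcons -ltnS; apply: leq_trans Hn.
  rewrite cardsD (setIidPr PE) ltn_subrL card_gt0 P0 /=.
  by apply: leq_trans (subset_leq_card PE); rewrite card_gt0.
have [s Hs] := IH (rcons prev P) Hlt.
exists (P :: s); split; first by apply/set0Pn; exists x.
split=> //; split=> // Q HQ; apply: HP; by rewrite mem_enum.
Qed.


Lemma greedy_struct K (size : 'I_K -> {set 'I_K} -> nat) prev s :
  greedy_from size prev s ->
  [/\ uniq s, (forall Q, Q \in s -> clique size Q /\ Q \subset remaining size prev)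
    & remaining size prev \subset \bigcup_(Q <- s) Q].
Proof.
elim: s prev => [|P s IH] prev /=.
  by move=> ->; split=> //; rewrite sub0set.
move=> [_ [Pin [_ Hg]]].
have [u HQ cov] := IH _ Hg.
have PE := @avail_sub K size prev P Pin.
have cP : clique size P by move: Pin; rewrite inE => /andP[].
rewrite remaining_rcons in HQ cov.
split.
- rewrite /= u andbT; apply/negP=> Ps.
  have [/and3P[P0 _ _] PP] := HQ P Ps.
  move: P0; apply/negP; rewrite negbK; apply/eqP/setP=> y; rewrite inE.
  apply/negP=> yP; have := subsetP PP y yP; by rewrite inE yP.
- move=> Q; rewrite inE => /orP[/eqP->//|Qs].
  have [cQ QE] := HQ Q Qs; split=> //; apply: subset_trans QE _; exact: subsetDl.
- apply/subsetP=> y yE; rewrite big_cons inE.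
  case yP: (y \in P) => //=.
  by apply: (subsetP cov); rewrite inE yP.
Qed.

Lemma greedy_cover K (size : 'I_K -> {set 'I_K} -> nat) s :
  greedy_run size s -> clique_cover size (greedy_output s).
Proof.
move=> /greedy_struct[u HQ cov]; split.
  by move=> P; rewrite inE => /HQ[].
apply/eqP; rewrite eqEsubset; apply/andP; split.
  apply/bigcupsP=> P; rewrite inE => /HQ[_]; rewrite /remaining big_nil setD0.
  by [].
apply/subsetP=> x xW.
have : x \in remaining size [::] by rewrite /remaining big_nil setD0.
move=> /(subsetP cov); rewrite mem_bigcup_seq => /hasP[P Ps xP].
by apply/bigcupP; exists P; rewrite ?inE.
Qed.

Set Implicit Arguments. Unset Strict Implicit.
Local Open Scope ring_scope.

Definition Hn (n : nat) : R := \sum_(j < n) (j.+1%:R)^-1.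

Lemma Hn_split r t : (t <= r)%N ->
  Hn r = Hn (r - t) + \sum_(r - t <= j < r) (j.+1%:R)^-1.
Proof.
move=> tr; rewrite /Hn -!(big_mkord xpredT (fun j => (j.+1%:R)^-1)).
by rewrite (@big_cat_nat _ _ _ (r - t)) ?leq_subr.
Qed.

Lemma Hn_diff r t : (0 < r)%N -> (t <= r)%N -> t%:R / r%:R <= Hn r - Hn (r - t).
Proof.
move=> r0 tr; rewrite (Hn_split tr) addrAC subrr add0r.
have -> : t%:R / r%:R = \sum_(r - t <= j < r) (r%:R : R)^-1.
  by rewrite sumr_const_nat subKn // mulrC mulr_natr.
apply: ler_sum_nat => j /andP[_ jr].
by rewrite lef_pV2 ?posrE ?ltr0n // ler_nat.
Qed.


Lemma Hn_ge0 n : 0 <= Hn n.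
Proof. by apply: sumr_ge0 => j _; rewrite invr_ge0 ler0n. Qed.

Lemma Hn_mono m n : (m <= n)%N -> Hn m <= Hn n.
Proof.
move=> mn; rewrite (Hn_split (leq_subr m n)) subKn // lerDl.
by apply: sumr_ge0 => j _; rewrite invr_ge0 ler0n.
Qed.

Lemma Hn_ln n : Rle (Hn n) (Rplus 1 (ln (INR n))).
Proof.
case: n => [|n].
  rewrite /Hn big_ord0 /= ln0 RplusE addr0; apply/RleP; exact: ler01.
elim: n => [|n IH].
  rewrite /Hn big_ord_recr big_ord0 /= ln_1 add0r invr1 RplusE addr0; apply/RleP; exact: lexx.
rewrite /Hn big_ord_recr -/(Hn n.+1).
have h2 := ln_step n.
rewrite -(INRE n.+2).
change (Rle (Rplus (Hn n.+1) (Rinv (INR n.+2))) (Rplus 1 (ln (INR n.+2)))).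
move: IH h2. lra.
Qed.


Lemma card_le_sum_inter (T : finType) (D : {set {set T}}) (P : {set T}) :
  P \subset \bigcup_(Q in D) Q -> (#|P| <= \sum_(Q in D) #|Q :&: P|)%N.
Proof.
move=> PD; rewrite -sum1_card.
apply: (@leq_trans (\sum_(x in P) \sum_(Q in D) (x \in Q : nat))).
  apply: leq_sum => x xP.
  have /bigcupP[Q0 Q0D xQ0] := subsetP PD x xP.
  by rewrite (bigD1 Q0) //= xQ0.
rewrite exchange_big /=; apply: leq_sum => Q QD.
rewrite -sum1_card big_mkcond [X in (_ <= X)%N]big_mkcond /=.
apply: leq_sum => x _; rewrite !inE.
by case: (x \in P); case: (x \in Q).
Qed.

Lemma ratio_swap (a b c d : R) : 0 < a -> 0 < b -> 0 < c -> 0 < d ->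
  a / b <= c / d -> d / c <= b / a.
Proof.
move=> a0 b0 c0 d0 h.
by rewrite -[d / c]invf_div -[b / a]invf_div lef_pV2 ?posrE ?divr_gt0.
Qed.

Definition Phi K (size : 'I_K -> {set 'I_K} -> nat)
  (D : {set {set subfile K}}) (E : {set subfile K}) : R :=
  \sum_(Q in D) (csize size Q)%:R * Hn #|Q :&: E|.

Lemma perQ K (size : 'I_K -> {set 'I_K} -> nat) prev P Q :
  P \in avail size prev ->
  (forall Q', Q' \in avail size prev -> Rle (ratio size Q') (ratio size P)) ->
  clique size Q ->
  #|Q :&: P|%:R * ((csize size P)%:R / #|P|%:R) <=
  (csize size Q)%:R * (Hn #|Q :&: remaining size prev|
                       - Hn #|Q :&: (remaining size prev :\: P)|).
Proof.
move=> Pin Hmax cQ.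
set E := remaining size prev.
have PE : P \subset E := @avail_sub K size prev P Pin.
have cP : clique size P by move: Pin; rewrite inE => /andP[].
have eq : #|Q :&: (E :\: P)| = (#|Q :&: E| - #|Q :&: P|)%N.
  by rewrite setIDA cardsD -setIA (setIidPr PE).
have tr : (#|Q :&: P| <= #|Q :&: E|)%N by apply: subset_leq_card; apply: setIS.
rewrite eq.
have [t0|tpos] := posnP #|Q :&: P|.
  by rewrite t0 mul0r subn0 subrr mulr0.
have rpos : (0 < #|Q :&: E|)%N := leq_trans tpos tr.
have QE0 : Q :&: E != set0 by rewrite -card_gt0.
have QEin := @avail_inter K size prev Q cQ QE0.
have h := Hmax _ QEin.
rewrite /ratio !RdivE !INRE -/E in h; move/RleP in h.
have cQE : (0 < csize size (Q :&: E))%N.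
  by apply: clique_csize_pos; move: QEin; rewrite inE => /andP[].
have cP0 : (0 < csize size P)%N by apply: clique_csize_pos.
have p0 : (0 < #|P|)%N by rewrite card_gt0; case/and3P: cP.
have h2 : (csize size P)%:R / #|P|%:R <= (csize size (Q :&: E))%:R / #|Q :&: E|%:R :> R.
  by apply: ratio_swap h; rewrite ltr0n.
have h3 : (csize size (Q :&: E))%:R <= (csize size Q)%:R :> R.
  by rewrite ler_nat; apply: csize_sub; apply: subsetIl.
apply: (@le_trans _ _ (#|Q :&: P|%:R * ((csize size Q)%:R / #|Q :&: E|%:R))).
  apply: ler_wpM2l; first exact: ler0n.
  apply: le_trans h2 _; apply: ler_wpM2r h3.
  by rewrite invr_ge0 ler0n.
rewrite mulrCA; apply: ler_wpM2l; first exact: ler0n.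
exact: Hn_diff.
Qed.

Lemma Phi_ge0 K (size : 'I_K -> {set 'I_K} -> nat) D E : 0 <= Phi size D E.
Proof. by apply: sumr_ge0 => Q _; apply: mulr_ge0; [exact: ler0n|exact: Hn_ge0]. Qed.

Lemma greedy_bound K (size : 'I_K -> {set 'I_K} -> nat) prev s (D : {set {set subfile K}}) :
  greedy_from size prev s -> (forall Q, Q \in D -> clique size Q) ->
  remaining size prev \subset \bigcup_(Q in D) Q ->
  (\sum_(P <- s) csize size P)%:R <= Phi size D (remaining size prev).
Proof.
elim: s prev => [|P s IH] prev /=.
  by move=> _ _ _; rewrite big_nil; exact: Phi_ge0.
move=> [_ [Pin [Hmax Hg]]] cD cov.
set E := remaining size prev.
have PE : P \subset E := @avail_sub K size prev P Pin.
have cP : clique size P by move: Pin; rewrite inE => /andP[].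
have := IH _ Hg cD; rewrite remaining_rcons -/E => /(_ (subset_trans (subsetDl _ _) cov)) IH'.
rewrite big_cons natrD.
rewrite -[Phi size D E](subrK (Phi size D (E :\: P))) lerD //.
rewrite /Phi -sumrB.
apply: (@le_trans _ _ (\sum_(Q in D) #|Q :&: P|%:R * ((csize size P)%:R / #|P|%:R))).
  rewrite -mulr_suml -natr_sum.
  have p0 : (0 < #|P|)%N by rewrite card_gt0; case/and3P: cP.
  apply: (@le_trans _ _ (#|P|%:R * ((csize size P)%:R / #|P|%:R))).
    by rewrite mulrCA divff ?mulr1 // pnatr_eq0 -lt0n.
  apply: ler_wpM2r.
    by apply: divr_ge0; apply: ler0n.
  rewrite ler_nat; apply: card_le_sum_inter; exact: subset_trans PE cov.
apply: ler_sum => Q QD.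
rewrite -mulrBr; exact: (perQ Pin Hmax (cD Q QD)).
Qed.

Local Close Scope ring_scope.


Theorem lemma1 (K : nat) (size : 'I_K -> {set 'I_K} -> nat) :
  (exists s, greedy_run size s) /\
  forall s, greedy_run size s ->
    clique_cover size (greedy_output s) /\
    forall D, clique_cover size D ->
      Rle (INR (cost size (greedy_output s)))
          (Rmult (Rplus 1 (ln (INR K))) (INR (cost size D))).
Proof.
split.
  exact: (@greedy_exists_from K size _ [::] (leqnn _)).
move=> s Hs; split; first exact: greedy_cover.
move=> D [cD covD].
have [u _ _] := @greedy_struct K size [::] s Hs.
have Wrem : remaining size [::] = Wset size by rewrite /remaining big_nil setD0.
have cst : cost size (greedy_output s) = \sum_(P <- s) csize size P.
  rewrite /cost /greedy_output big_uniq //; apply: eq_bigl => P; by rewrite inE.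
rewrite cst !INRE RmultE RplusE; apply/RleP.
have cov : remaining size [::] \subset \bigcup_(Q in D) Q by rewrite Wrem covD.
apply: le_trans (greedy_bound Hs cD cov) _.
apply: (@le_trans _ _ (Hn K * (cost size D)%:R)%R).
  rewrite /Phi /cost natr_sum mulr_sumr; apply: ler_sum => Q QD.
  rewrite mulrC; apply: ler_wpM2r; first exact: ler0n.
  apply: Hn_mono; apply: leq_trans (@clique_card K size Q (cD Q QD)).
  by apply: subset_leq_card; apply: subsetIl.
apply: ler_wpM2r; first exact: ler0n.
by apply/RleP; rewrite -INRE; apply: Hn_ln.
Qed.
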